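(* Let $T$ be a minimal homeomorphism of a compact metric space $X$, let $G$ be a locally compact second countable group, let $f\colon X\to G$ be a continuous regular cocycle and let $C\subseteq X\times G$ be a surjective $\mathbf T_f$-orbit closure. Then every nonempty relatively open subset of $C$ projects, under the first coordinate projection $\pi_X\colon X\times G\to X$, onto a subset of $X$ with nonempty interior.
   Context: The cocycle is $f(n,x)=f(T^{n-1}x)\cdots f(x)$ for $n\ge1$, $f(0,x)=\mathbf 1_G$, $f(n,x)=f(-n,T^nx)^{-1}$ for $n<0$. The skew product is $\mathbf T_f(x,g)=(Tx,f(x)g)$ on $X\times G$. A surjective $\mathbf T_f$-orbit closure is the closure of the $\mathbf T_f$-orbit of a single point of $X\times G$ which projects onto all of $X$ under $\pi_X$; $f$ is regular if such an orbit closure exists. *)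

(* Defs.v *)
From HB Require Import structures.
From mathcomp Require Import all_boot all_order all_algebra.
From mathcomp Require Import all_classical all_reals all_analysis.
Set Implicit Arguments. Unset Strict Implicit. Unset Printing Implicit Defensive.
Import Order.TTheory GRing.Theory Num.Theory.
Local Open Scope classical_set_scope.
Local Open Scope ring_scope.

Definition iterz (A : Type) (F Fi : A -> A) (n : int) : A -> A :=
  match n with
  | Posz k => iter k F
  | Negz k => iter k.+1 Fi
  end.

Definition homeomorphism_with (X : topologicalType) (T Ti : X -> X) : Prop :=
  [/\ continuous T, continuous Ti, cancel T Ti & cancel Ti T].

Definition orbitz (A : Type) (F Fi : A -> A) (a : A) : set A :=
  [set iterz F Fi n a | n in [set: int]].

Definition minimal_homeo (X : topologicalType) (T Ti : X -> X) : Prop :=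
  forall x : X, closure (orbitz T Ti x) = [set: X].

Definition topological_group (G : topologicalType)
  (mul : G -> G -> G) (inv : G -> G) (one : G) : Prop :=
  (forall a b c, mul a (mul b c) = mul (mul a b) c) /\
  (forall a, mul one a = a) /\ (forall a, mul a one = a) /\
  (forall a, mul (inv a) a = one) /\ (forall a, mul a (inv a) = one) /\
  continuous (fun p : G * G => mul p.1 p.2) /\ continuous inv.

Definition lcsc_group (G : topologicalType)
  (mul : G -> G -> G) (inv : G -> G) (one : G) : Prop :=
  [/\ topological_group mul inv one, hausdorff_space G,
      locally_compact [set: G] & @second_countable G].

Definition skew (X G : Type) (mul : G -> G -> G) (T : X -> X) (f : X -> G)
  (p : X * G) : X * G := (T p.1, mul (f p.1) p.2).
Definition skew_inv (X G : Type) (mul : G -> G -> G) (inv : G -> G)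
  (Ti : X -> X) (f : X -> G) (p : X * G) : X * G :=
  (Ti p.1, mul (inv (f (Ti p.1))) p.2).

Definition surjective_orbit_closure (X G : topologicalType)
  (mul : G -> G -> G) (inv : G -> G) (T Ti : X -> X) (f : X -> G)
  (C : set (X * G)) : Prop :=
  exists p : X * G,
    C = closure (orbitz (skew mul T f) (skew_inv mul inv Ti f) p) /\
    fst @` C = [set: X].

Definition regular_cocycle (X G : topologicalType)
  (mul : G -> G -> G) (inv : G -> G) (T Ti : X -> X) (f : X -> G) : Prop :=
  exists C, surjective_orbit_closure mul inv T Ti f C.

Definition rel_open (Y : topologicalType) (C U : set Y) : Prop :=
  exists V : set Y, open V /\ U = V `&` C.

(* Main.v *)
Require Import Defs.
From mathcomp Require Import all_boot all_order all_algebra.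
From mathcomp Require Import all_classical all_reals all_analysis.
From mathcomp Require Import zify.
Set Implicit Arguments. Unset Strict Implicit. Unset Printing Implicit Defensive.
Local Open Scope classical_set_scope.

Lemma cont_nbhs (A B : topologicalType) (f : A -> B) x S :
  continuous f -> nbhs (f x) S -> nbhs x (f @^-1` S).
Proof. move=> cf Sx; exact: cf x _ Sx. Qed.

Lemma nbhs_prodP (A B : topologicalType) (x : A) (y : B) S :
  nbhs (x, y) S -> exists P Q, [/\ nbhs x P, nbhs y Q & P `*` Q `<=` S].
Proof. by case=> -[P Q] /= [Px Qy] sub; exists P, Q. Qed.

Lemma nbhs_prod2 (A B : topologicalType) (x : A) (y : B) P Q :
  nbhs x P -> nbhs y Q -> nbhs (x, y) (P `*` Q).
Proof. by move=> Px Qy; exists (P, Q). Qed.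

Lemma cont_pair (T A B : topologicalType) (a : T -> A) (b : T -> B) :
  continuous a -> continuous b -> continuous (fun y => (a y, b y)).
Proof. by move=> ca cb y; apply: cvg_pair; [exact: ca | exact: cb]. Qed.

Lemma cont_comp (A B D : topologicalType) (f : A -> B) (g : B -> D) :
  continuous f -> continuous g -> continuous (g \o f).
Proof. by move=> cf cg x; apply: continuous_comp; [exact: cf|exact: cg]. Qed.

Lemma cont_fst (A B : topologicalType) : continuous (@fst A B).
Proof. by move=> [x y]; exact: cvg_fst. Qed.

Lemma cont_snd (A B : topologicalType) : continuous (@snd A B).
Proof. by move=> [x y]; exact: cvg_snd. Qed.

Lemma cont_cst (A B : topologicalType) (b : B) : continuous (fun _ : A => b).
Proof. by move=> x; exact: cvg_cst. Qed.

Lemma cont_id (A : topologicalType) : continuous (fun x : A => x).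
Proof. by move=> x; exact: cvg_id. Qed.

Lemma cont_mul (T G : topologicalType) (mul : G -> G -> G) (a b : T -> G) :
  continuous (fun p : G * G => mul p.1 p.2) -> continuous a -> continuous b ->
  continuous (fun y => mul (a y) (b y)).
Proof.
move=> cm ca cb; exact: (cont_comp (cont_pair ca cb) cm).
Qed.

Lemma cont_iter (T : topologicalType) (F : T -> T) n :
  continuous F -> continuous (iter n F).
Proof.
move=> cF; elim: n => [|n IH] /=; first by move=> x; exact: cvg_id.
exact: (cont_comp IH cF).
Qed.

Lemma cont_iterz (T : topologicalType) (F Fi : T -> T) n :
  continuous F -> continuous Fi -> continuous (iterz F Fi n).
Proof. by move=> cF cFi; case: n => k /=; apply: cont_iter. Qed.

Section Iter.
Variables (A : Type) (F Fi : A -> A).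
Hypotheses (FK : cancel F Fi) (FiK : cancel Fi F).

Lemma iterzS (n : int) x : iterz F Fi (n + 1) x = F (iterz F Fi n x).
Proof.
case: n => [k|[|k]].
- by rewrite -[1%R]/(Posz 1) -PoszD addn1.
- by rewrite /= FiK.
- have -> : (Negz k.+1 + 1 = Negz k)%R.
    by rewrite !NegzE; lia.
  by rewrite /= FiK.
Qed.

Lemma iterzN (n : int) x : iterz F Fi (n - 1) x = Fi (iterz F Fi n x).
Proof.
have := iterzS (n - 1) x; rewrite GRing.subrK => ->.
by rewrite FK.
Qed.

Lemma iterzD (a b : int) x : iterz F Fi (a + b) x = iterz F Fi a (iterz F Fi b x).
Proof.
elim/int_rect: a x => [|n IH|n IH] x.
- by rewrite GRing.add0r.
- have -> : ((n.+1)%:Z + b = (n%:Z + b) + 1)%R by lia.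
  rewrite iterzS IH -iterzS.
  by have -> : (n%:Z + 1 = n.+1%:Z)%R by lia.
- have -> : ((- n.+1 %:Z) + b = ((- n%:Z) + b) - 1)%R by lia.
  rewrite iterzN IH -iterzN.
  by have -> : (- n%:Z - 1 = - n.+1%:Z)%R by lia.
Qed.

End Iter.

Lemma iterz_skew (X G : topologicalType) (mul : G -> G -> G) (inv : G -> G) (one : G)
  (T Ti : X -> X) (f : X -> G) :
  (forall a b c, mul a (mul b c) = mul (mul a b) c) ->
  (forall a, mul one a = a) ->
  continuous (fun p : G * G => mul p.1 p.2) -> continuous inv ->
  continuous T -> continuous Ti -> continuous f ->
  forall k : int, exists c : X -> G, continuous c /\
    forall (y : X) (g : G), iterz (Defs.skew mul T f) (skew_inv mul inv Ti f) k (y, g)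
                = (iterz T Ti k y, mul (c y) g).
Proof.
move=> mA m1 cm ci cT cTi cf [n|n] /=.
- elim: n => [|n [c [cc hc]]].
    exists (fun=> one); split; first by move=> x; exact: cvg_cst.
    by move=> y g; rewrite (m1 g).
  exists (fun y => mul (f (iter n T y)) (c y)); split.
    apply: cont_mul => //; move=> x; apply: continuous_comp; [exact: cont_iter| exact: cf].
  by move=> y g; rewrite iterS hc /Defs.skew /= mA.
- elim: n => [|n [c [cc hc]]].
    exists (fun y => inv (f (Ti y))); split.
      exact: (cont_comp (cont_comp cTi cf) ci).
    by move=> y g; rewrite /= /skew_inv /=.
  exists (fun y => mul (inv (f (Ti (iter n.+1 Ti y)))) (c y)); split.
    apply: cont_mul => //.
    move=> x; apply: continuous_comp; last exact: ci.
    apply: continuous_comp; last exact: cf.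
    apply: continuous_comp; last exact: cTi.
    exact: cont_iter.
  by move=> y g; rewrite iterS hc /skew_inv /= mA.
Qed.

Lemma baire_compact (X : topologicalType) (x0 : X) (Q : nat -> set X) :
  compact [set: X] -> regular_space X -> (forall n, closed (Q n)) ->
  (forall x, exists n, Q n x) -> exists n, (Q n)° !=set0.
Proof.
move=> cpt reg clQ cov.
case: (pselect (exists n, (Q n)° !=set0)) => // nQ; exfalso.
have hQ n : ~ ((Q n)° !=set0) by move=> h; apply: nQ; exists n.
have step : forall p : nat * set X, exists B : set X, open p.2 -> p.2 !=set0 ->
    [/\ open B, B !=set0 & closure B `<=` p.2 `\` Q p.1].
  move=> [n A] /=.
  case: (pselect (open A /\ A !=set0)); last first.
    by move=> h; exists set0 => oA nA; exfalso; apply: h.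
  move=> [oA [x Ax]].
  have [z [Az nQz]] : (A `\` Q n) !=set0.
    apply: contrapT => h; apply: (hQ n); exists x.
    rewrite /interior; apply: (@filterS _ _ _ A); last first.
      by apply: open_nbhs_nbhs; split.
    move=> y Ay; apply: contrapT => nQy; apply: h; by exists y.
  have oD : open (A `\` Q n) by apply: openI => //; exact: closed_openC.
  have : nbhs z (A `\` Q n) by apply: open_nbhs_nbhs; split.
  move=> /(reg z) [B Bz clB].
  exists B°; split=> //; first exact: open_interior.
    by exists z; apply: nbhs_singleton; exact: nbhs_interior.
  apply: subset_trans clB; apply: closureS; exact: interior_subset.
have [g hg] := choice step.
pose O : nat -> set X := fix O n := if n is n'.+1 then g (n', O n') else setT.
have OS n : O n.+1 = g (n, O n) by [].
have onO n : open (O n) /\ O n !=set0.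
  elim: n => [|n [oO nO]]; first by split; [exact: openT | exists x0].
  by rewrite OS; have [] := hg (n, O n) oO nO.
have clO n : closure (O n.+1) `<=` O n `\` Q n.
  by rewrite OS; have [oO nO] := onO n; have [] := hg (n, O n) oO nO.
have decr m n : (m <= n)%N -> O n `<=` O m.
  elim: n => [|n IH]; first by rewrite leqn0 => /eqP ->.
  rewrite leq_eqVlt => /orP [/eqP -> //|]; rewrite ltnS => /IH.
  apply: subset_trans => x Ox.
  by have [] := clO n x (subset_closure Ox).
pose F := filter_from [set: nat] O.
have FF : ProperFilter F.
  apply: filter_from_proper; last by move=> i _; case: (onO i).
  apply: filter_from_filter; first by exists 0%N.
  move=> i j _ _; exists (maxn i j) => //.
  by move=> x Ox; split; apply: (decr _ (maxn i j)) => //; rewrite ?leq_maxl ?leq_maxr.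
have [z [_ cz]] := cpt F FF (ex_intro2 _ _ 0%N I (fun x _ => I)).
have [n Qnz] := cov z.
have : closure (O n.+1) z.
  move=> B Bz; apply: cz Bz; by exists n.+1.
by move=> /clO [].
Qed.

Lemma baire_countable (X : topologicalType) (x0 : X) (I : Type) (J : set I)
  (Q : I -> set X) : compact [set: X] -> regular_space X -> countable J ->
  (forall i, J i -> closed (Q i)) -> (forall x, exists2 i, J i & Q i x) ->
  exists2 i, J i & (Q i)° !=set0.
Proof.
move=> cpt reg /countable_injP [h hinj] clQ cov.
have inj i j : J i -> J j -> h i = h j -> i = j.
  by move=> Ji Jj; apply: hinj; rewrite inE.
pose Q' n := [set x | exists i, [/\ J i, h i = n & Q i x]].
have clQ' n : closed (Q' n).
  case: (pselect (exists i, J i /\ h i = n)) => [[i0 [Ji0 hi0]]|none].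
    have -> : Q' n = Q i0; last exact: clQ.
    apply/seteqP; split=> x.
      by move=> [i [Ji hi Qix]]; rewrite -(inj i i0) // hi hi0.
    by move=> Qx; exists i0.
  have -> : Q' n = set0; last exact: closed0.
  apply/seteqP; split=> x // [i [Ji hi _]]; exfalso; apply: none; by exists i.
have [|n [x Qx]] := baire_compact x0 cpt reg clQ'.
  by move=> x; have [i Ji Qix] := cov x; exists (h i), i.
have [i0 [Ji0 hi0 _]] := interior_subset Qx.
exists i0 => //; exists x; move: Qx; rewrite /interior; apply: filterS.
by move=> y [i [Ji hi Qiy]]; rewrite -(inj i i0) // hi hi0.
Qed.

Lemma closure_image_sub (T : topologicalType) (phi : T -> T) (A : set T) :
  continuous phi -> (forall a, A a -> A (phi a)) ->
  forall x, closure A x -> closure A (phi x).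
Proof.
move=> cphi hA x cAx B Bphix.
have [a [Aa Ba]] := cAx _ (cont_nbhs cphi Bphix).
by exists (phi a); split => //; apply: hA.
Qed.

Lemma closure_nbhs (T : topologicalType) (A : set T) x B :
  closure A x -> nbhs x B -> A `&` B !=set0.
Proof. by move=> cA; apply: cA. Qed.

Unset Implicit Arguments.

Theorem lemma2p2 (R : realType) (X : metricType R) (T Ti : X -> X)
  (G : topologicalType) (mul : G -> G -> G) (inv : G -> G) (one : G)
  (f : X -> G) (C : set (X * G)) :
  compact [set: X] ->
  homeomorphism_with T Ti ->
  minimal_homeo T Ti ->
  lcsc_group mul inv one ->
  continuous f ->
  regular_cocycle mul inv T Ti f ->
  surjective_orbit_closure mul inv T Ti f C ->
  forall U : set (X * G), rel_open C U -> U !=set0 ->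
    interior (fst @` U) !=set0.
Proof.
move=> cptX [cT cTi TK TiK] _ [[mA [m1l [m1r [mVl [mVr [cm ci]]]]]] hG lcG scG] cf _.
move=> [p [Cdef Csurj]] U [V [oV ->]] [u [Vu Cu]].
set Sk := Defs.skew mul T f.
set Si := skew_inv mul inv Ti f.
have SkK : cancel Sk Si.
  by move=> [x g]; rewrite /Sk /Si /Defs.skew /skew_inv /= TK mA mVl m1l.
have SiK : cancel Si Sk.
  by move=> [x g]; rewrite /Sk /Si /Defs.skew /skew_inv /= TiK mA mVr m1l.
have cSk : continuous Sk.
  apply: cont_pair; first exact: (cont_comp (@cont_fst _ _) cT).
  apply: cont_mul => //; [exact: (cont_comp (@cont_fst _ _) cf)| exact: cont_snd].
have cSi : continuous Si.
  apply: cont_pair; first exact: (cont_comp (@cont_fst _ _) cTi).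
  apply: cont_mul => //; last exact: cont_snd.
  exact: (cont_comp (cont_comp (cont_comp (@cont_fst _ _) cTi) cf) ci).
have Cinv k q : C q -> C (iterz Sk Si k q).
  rewrite Cdef; apply: closure_image_sub; first exact: cont_iterz.
  move=> a [n _ <-]; exists (k + n)%R => //; exact: iterzD.
have invu a b : mul b a = one -> b = inv a.
  by move=> h; rewrite -[b]m1r -(mVr a) mA h m1l.
have invinv a : inv (inv a) = a by symmetry; apply: invu; exact: mVr.
have invM a b : inv (mul a b) = mul (inv b) (inv a).
  symmetry; apply: invu; rewrite -mA [mul (inv a) _]mA mVl m1l; exact: mVl.
have inv1 : inv one = one by symmetry; apply: invu; exact: m1l.
have [q0 [[n0 _ q0def] Vq0]] : orbitz Sk Si p `&` V !=set0.
  move: Cu; rewrite Cdef => /closure_nbhs; apply; exact: open_nbhs_nbhs.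
case: q0 q0def Vq0 => a0 b0 q0def Vq0.
have [Ox [Wg [Oa0 Wb0 OWV]]] := nbhs_prodP (open_nbhs_nbhs (conj oV Vq0)).
have [P [Pone Pprop]] : exists P, nbhs one P /\ forall u s t, P u -> P s -> P t ->
    Wg (mul (mul u b0) (mul (inv s) t)).
  have h1 : nbhs (b0, one) ((fun q : G * G => mul q.1 q.2) @^-1` Wg).
    by apply: (cont_nbhs cm); rewrite /= m1r.
  have [A1 [B1 [A1b B1o AB]]] := nbhs_prodP h1.
  have h2 : nbhs one ((fun u => mul u b0) @^-1` A1).
    apply: (cont_nbhs (f := fun u => mul u b0)); last by rewrite m1l.
    exact: (@cont_mul _ _ mul (fun x => x) (fun _ => b0) cm (@cont_id _) (@cont_cst _ _ b0)).
  have h3 : nbhs (one, one) ((fun q : G * G => mul (inv q.1) q.2) @^-1` B1).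
    apply: (cont_nbhs (f := fun q : G * G => mul (inv q.1) q.2)); last by rewrite /= mVl.
    exact: (@cont_mul _ _ mul (fun q : G * G => inv q.1) (@snd G G) cm (cont_comp (@cont_fst _ _) ci) (@cont_snd _ _)).
  have [P2 [P3 [P2o P3o P23]]] := nbhs_prodP h3.
  exists ((fun u => mul u b0) @^-1` A1 `&` P2 `&` P3); split.
    by apply: filterI => //; apply: filterI.
  move=> v s t [[Pv _] _] [[_ Ps] _] [[_ _] Pt].
  apply: (AB (mul v b0, mul (inv s) t)); split => //=.
  exact: (P23 (s, t)).
set Po := P°.
have Poone : nbhs one Po by exact: nbhs_interior.
have oPo : open Po by exact: open_interior.
have PoP : Po `<=` P by exact: interior_subset.
have regG : regular_space G.
  apply: (@completely_regular_regular R).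
  exact: (@locally_compact_completely_regular G R lcG hG).
have [B1 B1one clB1] := regG one Po Poone.
have [B0 B0w [cB0 clB0]] := lcG one I.
have B0one : nbhs one B0.
  by move: B0w; rewrite /within /= nearE; apply: filterS => x; apply.
set L := B0 `&` closure B1.
have cptL : compact L by apply: compact_closedI => //; exact: closed_closure.
have LPo : L `<=` Po by move=> x [_ /clB1].
have Lone : nbhs one L.
  apply: filterI => //; apply: filterS B1one; exact: subset_closure.
have [Bs cBs basBs] := scG.
have hex : forall S : set G, exists h : G, S !=set0 -> S h.
  move=> S; case: (pselect (S !=set0)) => [[h Sh]|nS]; first by exists h.
  by exists one.
have [hS hhS] := choice hex.
pose Q (S : set G) := fst @` (([set: X] `*` (mul (hS S) @` L)) `&` C).
have clC : closed C by rewrite Cdef; exact: closed_closure.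
have clQ S : Bs S -> closed (Q S).
  move=> _; apply: compact_closed; first exact: metric_hausdorff.
  apply: continuous_compact; first exact: continuous_subspaceT (@cont_fst _ _).
  apply: compact_closedI => //; apply: compact_setX => //.
  apply: continuous_compact => //; apply: continuous_subspaceT.
  exact: (@cont_mul _ _ mul (fun _ => hS S) (fun x => x) cm (@cont_cst _ _ _) (@cont_id _)).
have cov x : exists2 S, Bs S & Q S x.
  have : (fst @` C) x by rewrite Csurj.
  case=> -[x' g] Cxg /= xx'.
  have kc : continuous (fun h => mul (inv h) g).
    exact: (@cont_mul _ _ mul inv (fun _ => g) cm ci (@cont_cst _ _ _)).
  have h1 : nbhs g ((fun h => mul (inv h) g) @^-1` L°).
    by apply: (cont_nbhs kc); rewrite mVl; exact: nbhs_interior.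
  have [S [BsS Sg] SS'] := basBs.2 g _ h1.
  exists S => //; exists (x', g) => //; split => //; split => //=.
  exists (mul (inv (hS S)) g).
    by apply: interior_subset; apply: SS'; apply: hhS; exists g.
  by rewrite mA mVr m1l.
have [S BsS [x2 Qx2]] := baire_countable a0 cptX uniform_regular cBs clQ cov.
set h := hS S.
have [[x2' g2] [[_ [l2 Ll2 g2def]] Cx2g2] /= x2def] := interior_subset Qx2.
have Zg2 : nbhs g2 ((fun z => mul (inv h) z) @^-1` Po).
  apply: (cont_nbhs (f := fun z => mul (inv h) z)).
    exact: (@cont_mul _ _ mul (fun _ => inv h) (fun x => x) cm (@cont_cst _ _ _) (@cont_id _)).
  rewrite /= in g2def; rewrite -g2def mA mVl m1l; apply: open_nbhs_nbhs; split => //; exact: LPo.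
have : nbhs (x2, g2) ((Q S)° `*` ((fun z => mul (inv h) z) @^-1` Po)).
  by apply: nbhs_prod2 => //; exact: nbhs_interior.
move: Cx2g2; rewrite -x2def Cdef => /closure_nbhs /[apply].
move=> [q1 [[m _ q1def] [Qx1 Zg1]]].
set k := (n0 - m)%R.
have q0k : iterz Sk Si k q1 = (a0, b0).
  by rewrite -q1def -iterzD // GRing.subrK.
have [c [cc hc]] := iterz_skew mA m1l cm ci cT cTi cf k.
case: q1 q1def Qx1 Zg1 q0k => x1 g1 q1def Qx1 Zg1 /=.
rewrite hc => -[a0def b0def].
set Nx := ((Q S)° `&` ((iterz T Ti k) @^-1` Ox)) `&`
          ((fun y => mul (c y) (inv (c x1))) @^-1` P).
have Nx1 : nbhs x1 Nx.
  apply: filterI; first apply: filterI.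
  - by apply: open_nbhs_nbhs; split => //; exact: open_interior.
  - by apply: (cont_nbhs (cont_iterz (n:=k) cT cTi)); rewrite a0def.
  - apply: (cont_nbhs (f := fun y => mul (c y) (inv (c x1)))); last by rewrite mVr.
    exact: (@cont_mul _ _ mul c (fun _ => inv (c x1)) cm cc (@cont_cst _ _ _)).
exists a0; rewrite /interior.
have rhoa0 : iterz T Ti (- k)%R a0 = x1.
  by rewrite -a0def -iterzD // GRing.addNr.
have := cont_nbhs (cont_iterz (n:=(- k)%R) cT cTi) (x := a0) (S := Nx).
rewrite rhoa0 => /(_ Nx1); apply: filterS => z [[Qy Oy] Py].
have zdef : iterz T Ti k (iterz T Ti (- k)%R z) = z.
  by rewrite -iterzD // GRing.subrr.
move: Qy Oy Py; set y := iterz T Ti (- k)%R z => Qy Oy Py.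
have [[y' g] [[_ [l Ll gdef]] Cyg] /= y'def] := interior_subset Qy.
exists (iterz Sk Si k (y', g)); last by rewrite hc /= y'def zdef.
split; last by rewrite -Cdef; exact: (Cinv k _ Cyg).
rewrite hc; apply: OWV; split => /=; first by rewrite y'def.
have := Pprop _ _ _ Py (PoP _ Zg1) (PoP _ (LPo _ Ll)).
congr Wg.
rewrite /= in gdef *; rewrite -b0def y'def -gdef invM invinv -!mA.
by rewrite [mul (inv (c x1)) _]mA mVl m1l [mul g1 _]mA mVr m1l.
Qed.
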